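(* There exists a fragile triangle-free graph (i.e., of girth at least $4$) with chromatic number $4$.
   Context: All graphs are finite and simple. A graph is $k$-connected if it has at least $k+1$ vertices and no vertex cutset with at most $k-1$ vertices. A graph is fragile if it has no $3$-connected subgraph. *)

(* Defs.v *)
From mathcomp Require Import all_boot.
Set Implicit Arguments. Unset Strict Implicit. Unset Printing Implicit Defensive.

Definition simple_graph (T : finType) (e : rel T) : Prop :=
  symmetric e /\ irreflexive e.

Definition is_subgraph (T : finType) (e : rel T) (V : {set T}) (F : rel T) : Prop :=
  forall x y, F x y -> [/\ e x y, x \in V & y \in V].

Definition connected_minus (T : finType) (V : {set T}) (F : rel T) (X : {set T}) : Prop :=
  let W := V :\: X in
  forall x y, x \in W -> y \in W ->
    connect [rel a b | [&& F a b, a \in W & b \in W]] x y.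

Definition k_connected (k : nat) (T : finType) (V : {set T}) (F : rel T) : Prop :=
  k.+1 <= #|V| /\
  forall X : {set T}, X \subset V -> #|X| <= k.-1 -> connected_minus V F X.

Definition fragile (T : finType) (e : rel T) : Prop :=
  ~ exists (V : {set T}) (F : rel T), is_subgraph e V F /\ k_connected 3 V F.

Definition triangle_free (T : finType) (e : rel T) : Prop :=
  forall x y z, ~ [/\ e x y, e y z & e z x].

Definition colorable (T : finType) (e : rel T) (k : nat) : Prop :=
  exists f : T -> 'I_k, forall x y, e x y -> f x != f y.

Definition chromatic_number_is (T : finType) (e : rel T) (k : nat) : Prop :=
  colorable e k /\ forall j, j < k -> ~ colorable e j.

(* Main.v *)
Require Import Defs.
From mathcomp Require Import all_boot.
Set Implicit Arguments. Unset Strict Implicit. Unset Printing Implicit Defensive.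

Section General.
Variable T : finType.
Variable e : rel T.

Lemma peel_lemma V F x : irreflexive e -> is_subgraph e V F -> k_connected 3 V F ->
  x \in V -> 2 < #|[set y in V | e x y]|.
Proof.
move=> irr sub [cV con] xV; rewrite ltnNge; apply/negP => cX.
set X := [set y in V | e x y] in cX.
have XV : X \subset V by apply/subsetP=> y; rewrite inE => /andP[yV _].
have cm := con X XV cX.
have : ~~ (V \subset x |: X).
  apply/negP => /subset_leq_card; rewrite cardsU1 => h.
  have := leq_trans cV h; move: cX; case: (x \notin X) => /=; case: #|X| => [|[|[|n]]] //.
move/subsetPn => [y yV]; rewrite in_setU1 negb_or => /andP[yx yX].
have xX : x \notin X by rewrite inE irr andbF.
have xW : x \in V :\: X by rewrite inE xX xV.
have yW : y \in V :\: X by rewrite inE yX yV.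
move: (cm x y xW yW) => /connectP [p].
case: p => [_ /= yx' | z p /= /andP[/and3P[Fxz _ zW] _] _].
  by rewrite yx' eqxx in yx.
have [exz _ zV] := sub _ _ Fxz.
by move: zW; rewrite !inE zV exz.
Qed.

Lemma split_lemma V F (A B : {set T}) : symmetric e -> is_subgraph e V F ->
  k_connected 3 V F -> V \subset A :|: B -> #|A :&: B| <= 2 ->
  (forall u v, u \in A -> u \notin B -> v \in B -> v \notin A -> ~~ e u v) ->
  V \subset A \/ V \subset B.
Proof.
move=> sym sub [cV con] VAB cAB nc.
case: (boolP (V \subset A)) => [|/subsetPn [u uV uA]]; first by left.
right; apply/subsetP => v vV; apply/negPn/negP => vB.
set X := V :&: (A :&: B).
have XV : X \subset V := subsetIl _ _.
have cX : #|X| <= 2 := leq_trans (subset_leq_card (subsetIr _ _)) cAB.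
have uW : u \in V :\: X by rewrite !inE (negbTE uA) uV.
have vW : v \in V :\: X by rewrite !inE (negbTE vB) vV !andbF.
have cn := con X XV cX u v uW vW.
set R := [rel a b | [&& F a b, a \in V :\: X & b \in V :\: X]] in cn.
have inAB w : w \in V -> (w \in A) || (w \in B).
  by move=> wV; have := subsetP VAB w wV; rewrite inE.
have cl : closed R A.
  move=> a b /and3P[Fab aW bW].
  have [eab aV bV] := sub _ _ Fab.
  move: aW bW; rewrite !inE aV bV !andbT => naX nbX.
  have := inAB a aV; have := inAB b bV.
  case aA: (a \in A); case bA: (b \in A); rewrite //= => bB aB.
  - have aB' : a \notin B by move: naX; rewrite aA.
    by have := nc a b aA aB' bB (negbT bA); rewrite eab.
  - have bB' : b \notin B by move: nbX; rewrite bA.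
    by have := nc b a bA bB' aB (negbT aA); rewrite sym eab.
have := closed_connect cl cn.
have vA : v \in A by have := inAB v vV; rewrite (negbTE vB) orbF.
by rewrite vA (negbTE uA).
Qed.

End General.

Lemma card_le_size n (s : seq nat) : #|[set x : 'I_n | val x \in s]| <= size s.
Proof.
rewrite cardE -(size_map val); apply: uniq_leq_size.
  by rewrite map_inj_uniq ?enum_uniq //; exact: val_inj.
by move=> y /mapP [z]; rewrite mem_enum inE => zs ->.
Qed.

Definition E : seq (nat*nat) := [::(0,3);(0,6);(0,7);(0,12);(0,14);(1,3);(1,5);(1,11);(2,4);(2,9);(2,12);(2,14);(3,9);(3,10);(4,6);(4,7);(5,7);(5,8);(6,8);(6,9);(7,11);(8,10);(10,11);(12,15);(12,18);(12,19);(13,15);(13,17);(13,23);(14,16);(14,21);(15,21);(15,22);(16,18);(16,19);(17,19);(17,20);(18,20);(18,21);(19,23);(20,22);(22,23)].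

Definition adjn (i j : nat) : bool := ((i,j) \in E) || ((j,i) \in E).
Definition eG : rel 'I_24 := fun x y => adjn x y.

Lemma eG_sym : symmetric eG.
Proof. by move=> x y; rewrite /eG /adjn orbC. Qed.

Lemma eG_irr : irreflexive eG.
Proof.
have h : all (fun p => p.1 != p.2) E by vm_compute.
move=> x; rewrite /eG /adjn orbb; apply/negP => /(allP h) /=.
by rewrite eqxx.
Qed.

Inductive cert := CEmpty | CPeel of nat & cert | CSplit of seq nat & seq nat & cert & cert.

Fixpoint valid (W : seq nat) (c : cert) : bool :=
  match c with
  | CEmpty => size W <= 3
  | CPeel x c' => (count (adjn x) W <= 2) && valid (filter (predC1 x) W) c'
  | CSplit a b c1 c2 =>
      [&& all (fun w => (w \in a) || (w \in b)) W,
          size (filter (mem b) a) <= 2,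
          all (fun u => all (fun v => ~~ adjn u v) [seq v <- b | v \notin a])
              [seq u <- a | u \notin b],
          valid a c1 & valid b c2]
  end.

Lemma valid_sound c : forall W, valid W c -> forall V F, is_subgraph eG V F ->
  k_connected 3 V F -> (forall x, x \in V -> val x \in W) -> False.
Proof.
elim: c => [|x c IH|a b c1 IH1 c2 IH2] W /=.
- move=> hW V F sub [cV _] VW.
  have : #|V| <= #|[set x : 'I_24 | val x \in W]|.
    by apply: subset_leq_card; apply/subsetP => y yV; rewrite inE VW.
  move=> h; have := leq_trans (leq_trans cV h) (leq_trans (card_le_size _ _) hW).
  by [].
- move=> /andP[cnt hv] V F sub kc VW.
  apply: (IH _ hv V F sub kc) => y yV.
  rewrite mem_filter VW // andbT /=.
  apply/negP => /eqP yx.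
  have := peel_lemma eG_irr sub kc yV.
  have : #|[set z in V | eG y z]| <= #|[set z : 'I_24 | val z \in filter (adjn x) W]|.
    apply: subset_leq_card; apply/subsetP => z; rewrite !inE mem_filter => /andP[zV eyz].
    by rewrite -yx; move: eyz; rewrite /eG => ->; rewrite VW.
  move=> h1 h2; have := leq_trans (leq_trans h2 h1) (card_le_size _ _).
  by rewrite size_filter => h3; have := leq_trans h3 cnt.
- move=> /and5P[cov cap ncr v1 v2] V F sub kc VW.
  have := split_lemma (A := [set z : 'I_24 | val z \in a]) (B := [set z : 'I_24 | val z \in b]) eG_sym sub kc.
  case.
  + apply/subsetP => y yV; rewrite !inE; exact: (allP cov _ (VW _ yV)).
  + apply: (leq_trans _ cap); apply: (leq_trans _ (card_le_size 24 _)).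
    by apply: subset_leq_card; apply/subsetP => y; rewrite !inE mem_filter andbC.
  + move=> u v; rewrite !inE => ua ub vb va.
    have := allP ncr (val u); rewrite mem_filter ub ua => /(_ isT) /allP.
    by move=> /(_ (val v)); rewrite mem_filter va vb => /(_ isT).
  + move=> /subsetP VA; apply: (IH1 _ v1 V F sub kc) => y /VA; by rewrite inE.
  + move=> /subsetP VB; apply: (IH2 _ v2 V F sub kc) => y /VB; by rewrite inE.
Qed.

Definition the_cert := (CSplit [::0;1;2;3;4;5;6;7;8;9;10;11] [::0;2;12;13;14;15;16;17;18;19;20;21;22;23] (CPeel 2 (CPeel 4 (CPeel 9 (CPeel 6 (CPeel 0 (CPeel 3 (CPeel 1 (CPeel 5 (CPeel 7 CEmpty))))))))) (CPeel 0 (CPeel 2 (CPeel 14 (CPeel 16 (CPeel 21 (CPeel 18 (CPeel 12 (CPeel 15 (CPeel 13 (CPeel 17 (CPeel 19 CEmpty)))))))))))).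

Lemma eG_fragile : fragile eG.
Proof.
move=> [V [F [sub kc]]].
have hv : valid (iota 0 24) the_cert by vm_compute.
apply: (valid_sound hv sub kc) => x _.
by rewrite mem_iota add0n ltn_ord.
Qed.

Lemma ord_iota (x : 'I_24) : val x \in iota 0 24.
Proof. by rewrite mem_iota add0n ltn_ord. Qed.

Lemma tri_check : all (fun i => all (fun j => all (fun k => ~~ [&& adjn i j, adjn j k & adjn k i])
   (iota 0 24)) (iota 0 24)) (iota 0 24).
Proof. by vm_compute. Qed.

Lemma eG_tf : triangle_free eG.
Proof.
move=> x y z [a b c].
have := allP (allP (allP tri_check _ (ord_iota x)) _ (ord_iota y)) _ (ord_iota z).
by move: a b c; rewrite /eG => -> -> ->.
Qed.

Definition col : seq nat := [::0;0;0;1;1;1;2;2;0;3;2;1;1;0;1;2;0;1;2;2;0;0;1;3].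
Definition fc (x : 'I_24) : 'I_4 := inord (nth 0 col x).

Lemma col4 : colorable eG 4.
Proof.
exists fc => x y.
have h1 : all (fun p => nth 0 col p.1 != nth 0 col p.2) E by vm_compute.
have h2 : all (fun c => c < 4) col by vm_compute.
have lt4 (z : 'I_24) : nth 0 col z < 4.
  by apply: (allP h2); apply: mem_nth; rewrite /= ltn_ord.
rewrite /eG /adjn /fc -val_eqE /= !inordK // => /orP [/(allP h1) //| /(allP h1) /=].
by rewrite eq_sym.
Qed.

Definition Nb : seq (seq nat) := [::[::];[::];[::];[::0;1];[::2];[::1];[::0;4];[::0;4;5];[::5;6];[::2;3;6];[::3;8];[::1;7;10];[::0;2];[::];[::0;2];[::12;13];[::14];[::13];[::12;16];[::12;16;17];[::17;18];[::14;15;18];[::15;20];[::13;19;22]].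
Definition okc (c : seq nat) k x := all (fun u => nth 0 c u != x) (nth [::] Nb k).

Lemma Nb_ok : all (fun k => all (fun u => (u < k) && adjn u k) (nth [::] Nb k)) (iota 0 24).
Proof. by vm_compute. Qed.
Fixpoint allc k : seq (seq nat) :=
  match k with
  | 0 => [:: [::]]
  | k'.+1 => flatten [seq [seq rcons c x | x <- [seq x <- [:: 0; 1; 2] | okc c k' x]] | c <- allc k']
  end.

Lemma allc_complete k (f : nat -> nat) : k <= 24 -> (forall i, i < k -> f i < 3) ->
  (forall i j, i < k -> j < k -> adjn i j -> f i != f j) -> map f (iota 0 k) \in allc k.
Proof.
elim: k => [|k IH] k24 hf hadj; first by [].
have -> : iota 0 k.+1 = rcons (iota 0 k) k by rewrite -cats1 -addn1 iotaD.
rewrite map_rcons.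
have -> : allc k.+1 = flatten [seq [seq rcons c x | x <- [seq x <- [:: 0; 1; 2] | okc c k x]] | c <- allc k] by [].
apply/flattenP; exists [seq rcons (map f (iota 0 k)) x | x <- [seq x <- [:: 0; 1; 2] | okc (map f (iota 0 k)) k x]].
  apply: map_f; apply: IH => [|i ik|i j ik jk]; first exact: ltnW.
    exact: hf _ (leq_trans ik (leqnSn _)).
  by apply: hadj; apply: leq_trans (leqnSn _).
apply: map_f; rewrite mem_filter; apply/andP; split.
  apply/allP => u uN.
  have k24' : k \in iota 0 24 by rewrite mem_iota add0n.
  have /andP[uk a] := allP (allP Nb_ok k k24') u uN.
  rewrite (nth_map 0) ?size_iota // nth_iota // add0n.
  by apply: hadj => //; apply: leq_trans (leqnSn _).
have := hf k (leqnn _); case: (f k) => [|[|[|n]]] //.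
Qed.

Lemma allc24 : allc 24 = [::].
Proof. by vm_compute. Qed.

Lemma not3 : ~ colorable eG 3.
Proof.
move=> [f Hf].
pose g i := if i < 24 then val (f (inord i)) else 0.
have h1 : forall i, i < 24 -> g i < 3.
  by move=> i ilt; rewrite /g ilt ltn_ord.
have h2 : forall i j, i < 24 -> j < 24 -> adjn i j -> g i != g j.
  move=> i j ilt jlt a; rewrite /g ilt jlt.
  have := Hf (inord i) (inord j); rewrite /eG !inordK // => /(_ a).
  by [].
have := @allc_complete 24 g (leqnn _) h1 h2.
by rewrite allc24 in_nil.
Qed.

Lemma chi4 : chromatic_number_is eG 4.
Proof.
split; first exact: col4.
move=> j jl [f Hf]; apply: not3.
have j3 : j <= 3 by [].
exists (fun x => widen_ord j3 (f x)) => x y exy.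
by have := Hf x y exy.
Qed.

Theorem mainTheorem6 :
  exists (T : finType) (e : rel T),
    [/\ simple_graph e, fragile e, triangle_free e & chromatic_number_is e 4].
Proof.
exists 'I_24, eG; split.
- by split; [exact: eG_sym | exact: eG_irr].
- exact: eG_fragile.
- exact: eG_tf.
- exact: chi4.
Qed.
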